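(* HazardErasPOP, as described in the context, is safe from use-after-free errors: no node freed by a reclaiming thread is subsequently accessed by any thread.
   Context: Setting: an asynchronous shared-memory system with a fixed set of threads operating on a linked concurrent data structure; each unlinked node is retired by exactly one thread. HazardErasPOP: there is a shared monotonically increasing global epoch. Each node records a birth epoch (global epoch at allocation) and a retire epoch (global epoch when retired). Each thread has private local reservation slots holding epochs (value NONE when empty), a row of a shared array of reservation slots, a shared counter publishCounter, and a private retire list. To read a node pointer from an atomic location into a slot, a thread repeatedly loads the pointer and then the global epoch; if the loaded epoch equals the epoch held in its local slot it returns the pointer, otherwise it writes the new epoch into its local slot (no fence, not published) and retries. At the end of an operation local slots are set to NONE. On retire a thread sets the node's retire epoch, appends it to its retire list, and when the list reaches a threshold it increments the global epoch, records all threads' publishCounter values, sends a POSIX signal to every other thread (whose handler copies its local reserved epochs into its shared slots and increments its publishCounter), waits until every other thread's publishCounter has increased, collects all published epochs, and frees each retired node for which every published epoch $e$ is NONE, or $e <$ the node's birth epoch, or $e >$ the node's retire epoch. Assumption: after being signalled, a thread publishes its reservations within bounded time. *)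

(* Defs.v *)
From mathcomp Require Import all_boot.

Set Implicit Arguments.
Unset Strict Implicit.
Unset Printing Implicit Defensive.

Definition upd (A : eqType) (B : Type) (f : A -> B) (a : A) (b : B) : A -> B :=
  fun x => if x == a then b else f x.

Section HazardErasPOP.

Variables (T : finType) (K : nat) (threshold : nat).

Definition slot := 'I_K.
(* Nodes are identified by unique allocation identities 0,1,2,... *)
Definition node := nat.
Definition epoch := nat.

Inductive ctl :=
  | Idle                                (* running data-structure code *)
  | PLoad of slot                       (* protect: about to load the pointer *)
  | PEpoch of slot & node               (* protect: pointer loaded, about to load epoch *)
  | RInc                                (* reclaim: about to increment the epoch *)
  | RSnap of seq T & (T -> nat)         (* reclaim: recording publishCounters *)
  | RSig of seq T & (T -> nat)          (* reclaim: sending signals *)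
  | RWait of (T -> nat)                 (* reclaim: waiting for counters to increase *)
  | RColl of seq (T * slot) & seq (option epoch). (* reclaim: collecting published epochs *)

(* None plays the role of NONE in reservation slots. *)
Record state := State {
  gepoch    : epoch;
  next_node : node;                      (* nodes < next_node are allocated *)
  birth     : node -> epoch;
  retired   : node -> option epoch;
  freed     : node -> bool;
  local     : T -> slot -> option epoch; (* private local reservation slots *)
  shared    : T -> slot -> option epoch;
  pcount    : T -> nat;
  pending   : T -> bool;                 (* a POSIX signal is pending *)
  rlist     : T -> seq node;
  holds     : T -> slot -> option node;  (* node obtained through slot (protected pointer) *)
  ctrl      : T -> ctl }.

Definition set_gepoch s v := State v (next_node s) (birth s) (retired s) (freed s) (local s) (shared s) (pcount s) (pending s) (rlist s) (holds s) (ctrl s).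
Definition set_next s v := State (gepoch s) v (birth s) (retired s) (freed s) (local s) (shared s) (pcount s) (pending s) (rlist s) (holds s) (ctrl s).
Definition set_birth s v := State (gepoch s) (next_node s) v (retired s) (freed s) (local s) (shared s) (pcount s) (pending s) (rlist s) (holds s) (ctrl s).
Definition set_retired s v := State (gepoch s) (next_node s) (birth s) v (freed s) (local s) (shared s) (pcount s) (pending s) (rlist s) (holds s) (ctrl s).
Definition set_freed s v := State (gepoch s) (next_node s) (birth s) (retired s) v (local s) (shared s) (pcount s) (pending s) (rlist s) (holds s) (ctrl s).
Definition set_local s v := State (gepoch s) (next_node s) (birth s) (retired s) (freed s) v (shared s) (pcount s) (pending s) (rlist s) (holds s) (ctrl s).
Definition set_shared s v := State (gepoch s) (next_node s) (birth s) (retired s) (freed s) (local s) v (pcount s) (pending s) (rlist s) (holds s) (ctrl s).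
Definition set_pcount s v := State (gepoch s) (next_node s) (birth s) (retired s) (freed s) (local s) (shared s) v (pending s) (rlist s) (holds s) (ctrl s).
Definition set_pending s v := State (gepoch s) (next_node s) (birth s) (retired s) (freed s) (local s) (shared s) (pcount s) v (rlist s) (holds s) (ctrl s).
Definition set_rlist s v := State (gepoch s) (next_node s) (birth s) (retired s) (freed s) (local s) (shared s) (pcount s) (pending s) v (holds s) (ctrl s).
Definition set_holds s v := State (gepoch s) (next_node s) (birth s) (retired s) (freed s) (local s) (shared s) (pcount s) (pending s) (rlist s) v (ctrl s).
Definition set_ctrl s v := State (gepoch s) (next_node s) (birth s) (retired s) (freed s) (local s) (shared s) (pcount s) (pending s) (rlist s) (holds s) v.

Definition set_ctl (s : state) (t : T) (c : ctl) := set_ctrl s (upd (ctrl s) t c).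

Definition init : state :=
  State 0 0 (fun _ => 0) (fun _ => None) (fun _ => false)
        (fun _ _ => None) (fun _ _ => None) (fun _ => 0) (fun _ => false)
        (fun _ => [::]) (fun _ _ => None) (fun _ => Idle).

Definition others (t : T) : seq T := [seq u <- enum T | u != t].

Definition slot_pairs (t : T) : seq (T * slot) :=
  [seq (u, i) | u <- others t, i <- enum 'I_K].

(* The collected epochs are those
   read from the other threads' shared slots, together with the
   reclaimer's own local reservations. *)
Definition ok_epoch (s : state) (n : node) (oe : option epoch) : bool :=
  match oe with
  | None => true
  | Some e => (e < birth s n) ||
              (match retired s n with Some r => r < e | None => false end)
  end.

Definition freeable (s : state) (acc : seq (option epoch)) (t : T) (n : node) : bool :=
  all (ok_epoch s n) (acc ++ [seq local s t i | i <- enum 'I_K]).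

Inductive event :=
  | EvAccess of T & node     (* thread t dereferences node n *)
  | EvInternal.

Inductive step : state -> event -> state -> Prop :=
  (* a thread may dereference any node it obtained through a slot which has
     not been overwritten/cleared since *)
  | st_access s t i n :
      holds s t i = Some n -> step s (EvAccess t n) s
  | st_alloc s t :
      ctrl s t = Idle ->
      step s EvInternal
        (set_next (set_birth s (upd (birth s) (next_node s) (gepoch s)))
                  (next_node s).+1)
  | st_begin s t i :
      ctrl s t = Idle -> step s EvInternal (set_ctl s t (PLoad i))
  (* load a pointer from an atomic location of the data structure: the
     loaded node is allocated and (still linked, hence) not yet retired *)
  | st_loadptr s t i n :
      ctrl s t = PLoad i -> n < next_node s -> retired s n = None ->
      step s EvInternal (set_ctl s t (PEpoch i n))
  | st_epoch_ok s t i n :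
      ctrl s t = PEpoch i n -> local s t i = Some (gepoch s) ->
      step s EvInternal
        (set_ctl (set_holds s (upd (holds s) t (upd (holds s t) i (Some n)))) t Idle)
  (* otherwise write the epoch into the local slot (not published) and retry *)
  | st_epoch_retry s t i n :
      ctrl s t = PEpoch i n -> local s t i <> Some (gepoch s) ->
      step s EvInternal
        (set_ctl (set_holds (set_local s (upd (local s) t (upd (local s t) i (Some (gepoch s)))))
                            (upd (holds s) t (upd (holds s t) i None))) t (PLoad i))
  | st_endop s t :
      ctrl s t = Idle ->
      step s EvInternal
        (set_holds (set_local s (upd (local s) t (fun _ => None)))
                   (upd (holds s) t (fun _ => None)))
  (* retire an (unlinked) node; every node is retired at most once *)
  | st_retire s t n :
      ctrl s t = Idle -> n < next_node s -> retired s n = None ->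
      step s EvInternal
        (set_ctl (set_rlist (set_retired s (upd (retired s) n (Some (gepoch s))))
                            (upd (rlist s) t (rcons (rlist s t) n)))
                 t (if threshold <= size (rcons (rlist s t) n) then RInc else Idle))
  | st_inc s t :
      ctrl s t = RInc ->
      step s EvInternal (set_ctl (set_gepoch s (gepoch s).+1) t (RSnap (others t) (fun _ => 0)))
  | st_snap s t u rest sn :
      ctrl s t = RSnap (u :: rest) sn ->
      step s EvInternal (set_ctl s t (RSnap rest (upd sn u (pcount s u))))
  | st_snap_done s t sn :
      ctrl s t = RSnap [::] sn ->
      step s EvInternal (set_ctl s t (RSig (others t) sn))
  | st_sig s t u rest sn :
      ctrl s t = RSig (u :: rest) sn ->
      step s EvInternal (set_ctl (set_pending s (upd (pending s) u true)) t (RSig rest sn))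
  | st_sig_done s t sn :
      ctrl s t = RSig [::] sn ->
      step s EvInternal (set_ctl s t (RWait sn))
  | st_wait s t sn :
      ctrl s t = RWait sn -> (forall u, u != t -> sn u < pcount s u) ->
      step s EvInternal (set_ctl s t (RColl (slot_pairs t) [::]))
  | st_coll s t u i rest acc :
      ctrl s t = RColl ((u, i) :: rest) acc ->
      step s EvInternal (set_ctl s t (RColl rest (shared s u i :: acc)))
  | st_free s t acc :
      ctrl s t = RColl [::] acc ->
      step s EvInternal
        (set_ctl (set_rlist (set_freed s (fun m => freed s m ||
                                          ((m \in rlist s t) && freeable s acc t m)))
                            (upd (rlist s) t [seq m <- rlist s t | ~~ freeable s acc t m]))
                 t Idle)
  (* signal handler of thread u (may interrupt u at any point) *)
  | st_handler s u :
      pending s u ->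
      step s EvInternal
        (set_pending (set_pcount (set_shared s (upd (shared s) u (local s u)))
                                 (upd (pcount s) u (pcount s u).+1))
                     (upd (pending s) u false)).

Inductive reachable : state -> Prop :=
  | reach_init : reachable init
  | reach_step s e s' : reachable s -> step s e s' -> reachable s'.

End HazardErasPOP.

(* Main.v *)
Require Import Defs.
From mathcomp Require Import all_boot.
Set Implicit Arguments. Unset Strict Implicit. Unset Printing Implicit Defensive.

Section Proof.
Variables (T : finType) (K threshold : nat).
Local Notation st := (state T K).
Implicit Types (s : st) (t u : T) (n : node).

Lemma upd_same (A : eqType) B (f : A -> B) a b : upd f a b a = b.
Proof. by rewrite /upd eqxx. Qed.
Lemma upd_other (A : eqType) B (f : A -> B) a b x : x != a -> upd f a b x = f x.
Proof. by rewrite /upd => /negbTE ->. Qed.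

Definition Q s t u := forall (i : slot K) n r e, n \in rlist s t -> retired s n = Some r ->
  holds s u i = Some n -> local s u i = Some e -> e <= r -> shared s u i = Some e.
Definition post s t := forall n, n \in rlist s t -> exists2 r, retired s n = Some r & r < gepoch s.
Definition PI s t : Prop :=
  match ctrl s t with
  | PEpoch i n => n < next_node s /\ (local s t i = Some (gepoch s) ->
        birth s n <= gepoch s /\ forall r, retired s n = Some r -> gepoch s <= r)
  | RSnap rest sn => post s t /\ forall u, u != t -> u \in rest \/ (sn u < pcount s u -> Q s t u)
  | RSig _ sn => post s t /\ forall u, u != t -> sn u < pcount s u -> Q s t u
  | RWait sn => post s t /\ forall u, u != t -> sn u < pcount s u -> Q s t u
  | RColl rest acc => post s t /\ forall u, u != t -> Q s t u /\
       forall (i : slot K) n r e, n \in rlist s t -> retired s n = Some r ->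
         holds s u i = Some n -> local s u i = Some e -> e <= r -> (u, i) \in rest \/ Some e \in acc
  | _ => True
  end.

Record Inv s : Prop := {
 i_loc : forall u (i : slot K) e, local s u i = Some e -> e <= gepoch s;
 i_birth : forall n, n < next_node s -> birth s n <= gepoch s;
 i_ret : forall n r, retired s n = Some r -> r <= gepoch s;
 i_rl : forall u n, n \in rlist s u -> retired s n != None;
 i_freed : forall n, freed s n -> exists2 r, retired s n = Some r & r < gepoch s;
 i_hold : forall u (i : slot K) n, holds s u i = Some n -> n < next_node s /\
    exists e, [/\ local s u i = Some e, birth s n <= e,
                  (forall r, retired s n = Some r -> e <= r) & freed s n = false];
 i_pi : forall t, PI s t }.

Definition H_ok s s' := forall u (i : slot K) n e, holds s' u i = Some n -> local s' u i = Some e ->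
  (holds s u i = Some n /\ local s u i = Some e) \/ e = gepoch s'.
Definition SC s s' := forall u (i : slot K), shared s' u i = shared s u i \/ shared s' u i = local s' u i.
Definition PC s s' := forall u, pcount s' u = pcount s u \/ (forall i : slot K, shared s' u i = local s' u i).


Lemma Q_step s s' t u : H_ok s s' -> SC s s' -> rlist s' t = rlist s t ->
  (forall n, n \in rlist s t -> retired s' n = retired s n) -> post s' t -> Q s t u -> Q s' t u.
Proof.
move=> Hh Hsc Hrl Hret Hp HQ i n r e Hn Hr Hhd Hl Her.
have Hn0 : n \in rlist s t by rewrite -Hrl.
case: (Hh _ _ _ _ Hhd Hl) => [[Hhd0 Hl0]|He].
  have := HQ i n r e Hn0; rewrite -Hret // => /(_ Hr Hhd0 Hl0 Her) Hs.
  by case: (Hsc u i) => ->.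
case: (Hp n Hn) => r' Hr'; rewrite Hr in Hr'; case: Hr' => <-.
by rewrite -He ltnNge Her.
Qed.

Lemma Q_direct s t u : (forall i : slot K, shared s u i = local s u i) -> Q s t u.
Proof. by move=> H i n r e _ _ _ Hl _; rewrite H. Qed.

Lemma post_step s s' t : gepoch s <= gepoch s' -> rlist s' t = rlist s t ->
  (forall n, n \in rlist s t -> retired s' n = retired s n) -> post s t -> post s' t.
Proof.
move=> Hg Hrl Hret Hp n; rewrite Hrl => Hn.
case: (Hp n Hn) => r Hr Hlt; exists r; first by rewrite Hret.
exact: leq_trans Hlt Hg.
Qed.

Lemma PI_env s s' t : Inv s -> ctrl s' t = ctrl s t ->
  gepoch s <= gepoch s' -> next_node s <= next_node s' -> rlist s' t = rlist s t ->
  (forall n, retired s' n = retired s n \/ (retired s n = None /\ retired s' n = Some (gepoch s'))) ->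
  (forall n, n < next_node s -> birth s' n = birth s n) ->
  (forall i : slot K, local s' t i = local s t i) ->
  H_ok s s' -> SC s s' -> PC s s' -> PI s' t.
Proof.
move=> I Hc Hg Hnx Hrl Hret Hb Hloc Hh Hsc Hpc.
have Hret' : forall n, n \in rlist s t -> retired s' n = retired s n.
  move=> n Hn; case: (Hret n) => // [[H0 _]].
  by move: (i_rl I Hn); rewrite H0.
have Hpost := post_step Hg Hrl Hret'.
have HQ : forall u, post s' t -> Q s t u -> Q s' t u.
  by move=> u Hp; apply: Q_step.
have HQ2 : forall u (sn : T -> nat), post s' t -> (sn u < pcount s u -> Q s t u) ->
    sn u < pcount s' u -> Q s' t u.
  move=> u sn Hp H; case: (Hpc u) => [->|Hd]; first by move=> /H; apply: HQ.
  by move=> _; apply: Q_direct.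
have := i_pi I t; rewrite /PI Hc.
case: (ctrl s t) => //.
- move=> i n [Hn H]; split; first exact: leq_trans Hn Hnx.
  rewrite Hloc => Hl.
  have Hge : gepoch s' = gepoch s.
    apply/eqP; rewrite eqn_leq Hg andbT.
    by have := i_loc I Hl.
  move: Hl; rewrite Hge => /H [Hb0 Hr0]; split; first by rewrite Hb.
  move=> r; case: (Hret n) => [->|[_ ->]]; first exact: Hr0.
  by case=> <-; rewrite Hge.
- move=> rest sn [Hp H]; have Hp' := Hpost Hp; split=> // u Hu.
  case: (H u Hu) => [->|H1]; [by left|right]; exact: HQ2.
- move=> rest sn [Hp H]; have Hp' := Hpost Hp; split=> // u Hu; exact: HQ2 (H u Hu).
- move=> sn [Hp H]; have Hp' := Hpost Hp; split=> // u Hu; exact: HQ2 (H u Hu).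
- move=> rest acc [Hp H]; have Hp' := Hpost Hp; split=> // u Hu.
  case: (H u Hu) => HQ0 Hra; split; first exact: HQ.
  move=> i n r e Hn Hr Hhd Hl Her.
  have Hn0 : n \in rlist s t by rewrite -Hrl.
  case: (Hh _ _ _ _ Hhd Hl) => [[Hhd0 Hl0]|He].
    by apply: (Hra i n r e Hn0) => //; rewrite -Hret'.
  case: (Hp' n Hn) => r' Hr'; rewrite Hr in Hr'; case: Hr' => <-.
  by rewrite -He ltnNge Her.
Qed.

Lemma neq_lt n m : n < m -> n == m = false.
Proof. by move=> H; rewrite ltn_eqF. Qed.

Lemma inv_alloc s t : Inv s -> ctrl s t = Idle T K ->
  Inv (set_next (set_birth s (upd (birth s) (next_node s) (gepoch s))) (next_node s).+1).
Proof.
move=> I Hc; constructor => /=.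
- exact: i_loc I.
- move=> n; rewrite ltnS leq_eqVlt /upd => /orP [/eqP->|H]; first by rewrite eqxx.
  by rewrite neq_lt //; apply: i_birth.
- exact: i_ret I.
- exact: i_rl I.
- exact: i_freed I.
- move=> u i n /(i_hold I) [Hn He]; split; first exact: ltnW.
  by rewrite /upd neq_lt.
- move=> t'; apply: (PI_env I) => //=.
  + by left.
  + by move=> n Hn; rewrite /upd neq_lt.
  + by rewrite /H_ok /= => u i n e -> ->; left.
  + by rewrite /SC /=; left.
  + by rewrite /PC /=; left.
Qed.

Lemma PI_ctl s t t' c : Inv s -> t' != t -> PI (set_ctl s t c) t'.
Proof.
move=> I ne; apply: (PI_env I) => //=.
- by rewrite upd_other.
- by left.
- by rewrite /H_ok /= => u i n e -> ->; left.
- by rewrite /SC /=; left.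
- by rewrite /PC /=; left.
Qed.

Lemma inv_ctl s t c : Inv s -> PI (set_ctl s t c) t -> Inv (set_ctl s t c).
Proof.
move=> I H; constructor; try by case: I.
move=> t'; case: (eqVneq t' t) => [->//|ne]; exact: PI_ctl.
Qed.

Lemma inv_pending s p : Inv s -> Inv (set_pending s p).
Proof. by case=> *; constructor. Qed.

Lemma PI_set s t c : PI (set_ctl s t c) t =
  match c with
  | PEpoch i n => n < next_node s /\ (local s t i = Some (gepoch s) ->
        birth s n <= gepoch s /\ forall r, retired s n = Some r -> gepoch s <= r)
  | RSnap rest sn => post s t /\ forall u, u != t -> u \in rest \/ (sn u < pcount s u -> Q s t u)
  | RSig _ sn => post s t /\ forall u, u != t -> sn u < pcount s u -> Q s t u
  | RWait sn => post s t /\ forall u, u != t -> sn u < pcount s u -> Q s t u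
  | RColl rest acc => post s t /\ forall u, u != t -> Q s t u /\
       forall (i : slot K) n r e, n \in rlist s t -> retired s n = Some r ->
         holds s u i = Some n -> local s u i = Some e -> e <= r -> (u, i) \in rest \/ Some e \in acc
  | _ => True
  end.
Proof. by rewrite /PI /= upd_same. Qed.

Lemma PI_get s t : Inv s -> PI s t = 
  match ctrl s t with
  | PEpoch i n => n < next_node s /\ (local s t i = Some (gepoch s) ->
        birth s n <= gepoch s /\ forall r, retired s n = Some r -> gepoch s <= r)
  | RSnap rest sn => post s t /\ forall u, u != t -> u \in rest \/ (sn u < pcount s u -> Q s t u)
  | RSig _ sn => post s t /\ forall u, u != t -> sn u < pcount s u -> Q s t u
  | RWait sn => post s t /\ forall u, u != t -> sn u < pcount s u -> Q s t u
  | RColl rest acc => post s t /\ forall u, u != t -> Q s t u /\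
       forall (i : slot K) n r e, n \in rlist s t -> retired s n = Some r ->
         holds s u i = Some n -> local s u i = Some e -> e <= r -> (u, i) \in rest \/ Some e \in acc
  | _ => True
  end.
Proof. by []. Qed.

Lemma inv_begin s t i : Inv s -> Inv (set_ctl s t (@PLoad T K i)).
Proof. by move=> I; apply: (inv_ctl I); rewrite PI_set. Qed.

Lemma inv_loadptr s t i n : Inv s -> n < next_node s -> retired s n = None ->
  Inv (set_ctl s t (@PEpoch T K i n)).
Proof.
move=> I Hn Hr; apply: (inv_ctl I); rewrite PI_set; split=> // _; split; first exact: i_birth.
by rewrite Hr.
Qed.

Lemma inv_snap s t u rest sn : Inv s -> ctrl s t = @RSnap T K (u :: rest) sn ->
  Inv (set_ctl s t (@RSnap T K rest (upd sn u (pcount s u)))).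
Proof.
move=> I Hc; have := i_pi I t; rewrite /PI Hc => -[Hp H].
apply: (inv_ctl I); rewrite PI_set; split=> // v Hv.
case: (eqVneq v u) => [->|ne]; first by right; rewrite upd_same ltnn.
rewrite upd_other //; case: (H v Hv); last by right.
by rewrite inE (negbTE ne) /=; left.
Qed.

Lemma inv_snap_done s t sn : Inv s -> ctrl s t = @RSnap T K [::] sn ->
  Inv (set_ctl s t (@RSig T K (others t) sn)).
Proof.
move=> I Hc; have := i_pi I t; rewrite /PI Hc => -[Hp H].
apply: (inv_ctl I); rewrite PI_set; split=> // v Hv.
by case: (H v Hv).
Qed.

Lemma inv_sig s t u rest sn : Inv s -> ctrl s t = @RSig T K (u :: rest) sn ->
  Inv (set_ctl (set_pending s (upd (pending s) u true)) t (@RSig T K rest sn)).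
Proof.
move=> I Hc; have I' := inv_pending (upd (pending s) u true) I.
have := i_pi I t; rewrite /PI Hc => -[Hp H].
by apply: (inv_ctl I'); rewrite PI_set.
Qed.

Lemma inv_sig_done s t sn : Inv s -> ctrl s t = @RSig T K [::] sn ->
  Inv (set_ctl s t (@RWait T K sn)).
Proof.
move=> I Hc; have := i_pi I t; rewrite /PI Hc => -[Hp H].
by apply: (inv_ctl I); rewrite PI_set.
Qed.

Lemma mem_slot_pairs t u (i : slot K) : u != t -> (u, i) \in @slot_pairs T K t.
Proof.
move=> ne; rewrite /slot_pairs; apply/allpairsP; exists (u, i) => /=.
by rewrite /others mem_filter ne mem_enum mem_enum.
Qed.

Lemma inv_wait s t sn : Inv s -> ctrl s t = @RWait T K sn -> (forall u, u != t -> sn u < pcount s u) ->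
  Inv (set_ctl s t (@RColl T K (@slot_pairs T K t) [::])).
Proof.
move=> I Hc Hw; have := i_pi I t; rewrite /PI Hc => -[Hp H].
apply: (inv_ctl I); rewrite PI_set; split=> // u Hu; split; first exact: H (Hw u Hu).
by move=> i *; left; apply: mem_slot_pairs.
Qed.

Lemma inv_coll s t u i rest acc : Inv s -> ctrl s t = @RColl T K ((u, i) :: rest) acc ->
  Inv (set_ctl s t (@RColl T K rest (shared s u i :: acc))).
Proof.
move=> I Hc; have := i_pi I t; rewrite /PI Hc => -[Hp H].
apply: (inv_ctl I); rewrite PI_set; split=> // v Hv; case: (H v Hv) => HQ Hra; split=> //.
move=> j n r e Hn Hr Hh Hl Her.
case: (Hra j n r e Hn Hr Hh Hl Her) => [|Ha]; last by right; rewrite inE Ha orbT.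
rewrite inE => /orP [/eqP [Ev Ej]|Hj]; last by left.
subst v j; right; by rewrite inE (HQ i n r e Hn Hr Hh Hl Her) eqxx.
Qed.

Lemma inv_epoch_ok s t i n : Inv s -> ctrl s t = @PEpoch T K i n -> local s t i = Some (gepoch s) ->
  Inv (set_ctl (set_holds s (upd (holds s) t (upd (holds s t) i (Some n)))) t (Idle T K)).
Proof.
move=> I Hc Hl; have := i_pi I t; rewrite /PI Hc => -[Hn /(_ Hl) [Hb Hr]].
have Hho : H_ok s (set_ctl (set_holds s (upd (holds s) t (upd (holds s t) i (Some n)))) t (Idle T K)).
  rewrite /H_ok /= => u j m e; rewrite /upd.
  case: (eqVneq u t) => [->|ne]; last by move=> -> ->; left.
  case: (eqVneq j i) => [->|nj]; last by move=> -> ->; left.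
  by move=> _; rewrite Hl => -[<-]; right.
constructor => /=; try by case: I.
- move=> u j m; rewrite /upd.
  case: (eqVneq u t) => [?|ne]; last exact: i_hold; subst u.
  case: (eqVneq j i) => [?|nj]; last exact: i_hold; subst j.
  case=> <-; split=> //; exists (gepoch s); split=> //.
  case Hf: (freed s n) => //; case: (i_freed I Hf) => r /Hr; rewrite leqNgt => /negbTE ->.
  done.
- move=> t'; case: (eqVneq t' t) => [->|ne]; first by rewrite /PI /= upd_same.
  apply: (PI_env I) => //=.
  + by rewrite upd_other.
  + by left.
  + by rewrite /SC /=; left.
  + by rewrite /PC /=; left.
Qed.

Lemma inv_retry s t i n : Inv s -> ctrl s t = @PEpoch T K i n ->
  Inv (set_ctl (set_holds (set_local s (upd (local s) t (upd (local s t) i (Some (gepoch s)))))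
                            (upd (holds s) t (upd (holds s t) i None))) t (@PLoad T K i)).
Proof.
move=> I Hc.
constructor => /=; try by case: I.
- move=> u j e; rewrite /upd.
  case: (eqVneq u t) => [?|ne]; last exact: i_loc; subst u.
  case: (eqVneq j i) => [?|nj]; last exact: i_loc; subst j.
  by case=> ->.
- move=> u j m; rewrite /upd.
  case: (eqVneq u t) => [?|ne]; last exact: i_hold; subst u.
  case: (eqVneq j i) => [?|nj]; last exact: i_hold; subst j.
  done.
- move=> t'; case: (eqVneq t' t) => [->|ne]; first by rewrite /PI /= upd_same.
  apply: (PI_env I) => //=.
  + by rewrite upd_other.
  + by left.
  + by move=> j; rewrite upd_other.
  + rewrite /H_ok /= => u j m e; rewrite /upd.
    case: (eqVneq u t) => [->|nu]; last by move=> -> ->; left.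
    case: (eqVneq j i) => [->|nj]; last by move=> -> ->; left.
    done.
  + by rewrite /SC /=; left.
  + by rewrite /PC /=; left.
Qed.

Lemma inv_endop s t : Inv s -> ctrl s t = Idle T K ->
  Inv (set_holds (set_local s (upd (local s) t (fun _ => None)))
                   (upd (holds s) t (fun _ => None))).
Proof.
move=> I Hc.
constructor => /=; try by case: I.
- move=> u j e; rewrite /upd.
  case: (eqVneq u t) => [?|ne]; last exact: i_loc; subst u.
  done.
- move=> u j m; rewrite /upd.
  case: (eqVneq u t) => [?|ne]; last exact: i_hold; subst u.
  done.
- move=> t'; case: (eqVneq t' t) => [->|ne]; first by rewrite /PI /= Hc.
  apply: (PI_env I) => //=.
  + by left.
  + by move=> j; rewrite upd_other.
  + rewrite /H_ok /= => u j m e; rewrite /upd.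
    case: (eqVneq u t) => [->|nu]; last by move=> -> ->; left.
    done.
  + by rewrite /SC /=; left.
  + by rewrite /PC /=; left.
Qed.

Lemma inv_retire s t n : Inv s -> ctrl s t = Idle T K -> n < next_node s -> retired s n = None ->
  Inv (set_ctl (set_rlist (set_retired s (upd (retired s) n (Some (gepoch s))))
                            (upd (rlist s) t (rcons (rlist s t) n)))
                 t (if threshold <= size (rcons (rlist s t) n) then RInc T K else Idle T K)).
Proof.
move=> I Hc Hn Hrn.
constructor => /=; try by case: I.
- move=> m r; rewrite /upd; case: (eqVneq m n) => [_ [<-]//|_]; exact: i_ret.
- move=> u m; rewrite {2}/upd; case: (eqVneq m n) => [//|nm].
  rewrite /upd; case: (eqVneq u t) => [?|nu]; last exact: i_rl; subst u.
  by rewrite mem_rcons inE (negbTE nm) /=; apply: i_rl.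
- move=> m Hf; case: (i_freed I Hf) => r Hr Hlt; exists r => //.
  by rewrite upd_other //; apply/eqP => E; rewrite E Hrn in Hr.
- move=> u j m /(i_hold I) [Hm [e [Hl Hb Hr Hf]]]; split=> //; exists e; split=> //.
  move=> r; rewrite /upd; case: (eqVneq m n) => [_ [<-]|_]; last exact: Hr.
  exact: i_loc Hl.
- move=> t'; case: (eqVneq t' t) => [->|ne].
    by rewrite /PI /= upd_same; case: ifP.
  apply: (PI_env I) => //=.
  + by rewrite upd_other.
  + by rewrite upd_other.
  + move=> m; rewrite /upd; case: (eqVneq m n) => [->|_]; [by right|by left].
  + by rewrite /H_ok /= => u j m e -> ->; left.
  + by rewrite /SC /=; left.
  + by rewrite /PC /=; left.
Qed.

Lemma inv_inc s t : Inv s -> ctrl s t = RInc T K ->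
  Inv (set_ctl (set_gepoch s (gepoch s).+1) t (@RSnap T K (others t) (fun _ => 0))).
Proof.
move=> I Hc.
constructor => /=; try by case: I.
- by move=> u i e /(i_loc I) /leqW.
- by move=> n /(i_birth I) /leqW.
- by move=> n r /(i_ret I) /leqW.
- by move=> n /(i_freed I) [r Hr Hlt]; exists r => //; rewrite ltnS ltnW.
- move=> t'; case: (eqVneq t' t) => [->|ne].
    rewrite /PI /= upd_same; split.
      move=> n /(i_rl I); case Hr: (retired s n) => [r|//] _; exists r => //.
      by rewrite ltnS (i_ret I Hr).
    by move=> u Hu; left; rewrite /others mem_filter Hu mem_enum.
  apply: (PI_env I) => //=.
  + by rewrite upd_other.
  + by left.
  + by rewrite /H_ok /= => u j m e -> ->; left.
  + by rewrite /SC /=; left.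
  + by rewrite /PC /=; left.
Qed.

Lemma not_freeable s t acc u (i : slot K) m : Inv s -> ctrl s t = @RColl T K [::] acc ->
  holds s u i = Some m -> m \in rlist s t -> freeable s acc t m = false.
Proof.
move=> I Hc Hh Hm.
have := i_rl I Hm; case Hr: (retired s m) => [r|//] _.
case: (i_hold I Hh) => _ [e [Hl Hb Her Hf]]; have Her' := Her r Hr.
have Hmem : Some e \in acc ++ [seq local s t i | i <- enum 'I_K].
  rewrite mem_cat; apply/orP; case: (eqVneq u t) => [Eu|ne].
    right; apply/mapP; exists i; first by rewrite mem_enum.
    by rewrite -Eu Hl.
  left; have := i_pi I t; rewrite /PI Hc => -[_ /(_ u ne) [_ H]].
  by case: (H i m r e Hm Hr Hh Hl Her').
apply/negbTE/negP => /allP /(_ _ Hmem).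
by rewrite /ok_epoch Hr ltnNge Hb /= ltnNge Her'.
Qed.

Lemma inv_free s t acc : Inv s -> ctrl s t = @RColl T K [::] acc ->
  Inv (set_ctl (set_rlist (set_freed s (fun m => freed s m ||
                                          ((m \in rlist s t) && freeable s acc t m)))
                            (upd (rlist s) t [seq m <- rlist s t | ~~ freeable s acc t m]))
                 t (Idle T K)).
Proof.
move=> I Hc.
constructor => /=; try by case: I.
- move=> u m; rewrite /upd; case: (eqVneq u t) => [?|nu]; last exact: i_rl; subst u.
  by rewrite mem_filter => /andP [_ /(i_rl I)].
- move=> m /orP [/(i_freed I)//|/andP [Hm _]].
  have := i_pi I t; rewrite /PI Hc => -[Hp _]; exact: Hp.
- move=> u j m Hh; case: (i_hold I Hh) => Hm [e [Hl Hb Hr Hf]]; split=> //.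
  exists e; split=> //; rewrite Hf /=.
  case Hmt: (m \in rlist s t) => //=; exact: not_freeable Hh Hmt.
- move=> t'; case: (eqVneq t' t) => [->|ne]; first by rewrite /PI /= upd_same.
  apply: (PI_env I) => //=.
  + by rewrite upd_other.
  + by rewrite upd_other.
  + by left.
  + by rewrite /H_ok /= => u j m e -> ->; left.
  + by rewrite /SC /=; left.
  + by rewrite /PC /=; left.
Qed.

Lemma inv_handler s u : Inv s ->
  Inv (set_pending (set_pcount (set_shared s (upd (shared s) u (local s u)))
                                 (upd (pcount s) u (pcount s u).+1))
                     (upd (pending s) u false)).
Proof.
move=> I; apply: inv_pending.
constructor => /=; try by case: I.
move=> t'; apply: (PI_env I) => //=.
- by left.
- by rewrite /H_ok /= => v j m e -> ->; left.
- by rewrite /SC /= => v j; rewrite /upd; case: (eqVneq v u) => [->|_]; [right|left].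
- by rewrite /PC /= => v; rewrite /upd; case: (eqVneq v u) => [->|_]; [right|left].
Qed.

Lemma inv_step s e s' : Inv s -> step threshold s e s' -> Inv s'.
Proof.
move=> I h; case: h I.
- by [].
- move=> {}s t Hc I; exact: inv_alloc I Hc.
- move=> {}s t i Hc I; exact: inv_begin.
- move=> {}s t i n Hc Hn Hr I; exact: inv_loadptr.
- move=> {}s t i n Hc Hl I; exact: inv_epoch_ok.
- move=> {}s t i n Hc Hl I; exact: inv_retry Hc.
- move=> {}s t Hc I; exact: inv_endop Hc.
- move=> {}s t n Hc Hn Hr I; exact: inv_retire.
- move=> {}s t Hc I; exact: inv_inc.
- move=> {}s t u rest sn Hc I; exact: inv_snap Hc.
- move=> {}s t sn Hc I; exact: inv_snap_done Hc.
- move=> {}s t u rest sn Hc I; exact: inv_sig Hc.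
- move=> {}s t sn Hc I; exact: inv_sig_done Hc.
- move=> {}s t sn Hc Hw I; exact: inv_wait Hc Hw.
- move=> {}s t u i rest acc Hc I; exact: inv_coll Hc.
- move=> {}s t acc Hc I; exact: inv_free Hc.
- move=> {}s u Hp I; exact: inv_handler.
Qed.

Lemma inv_init : Inv (init T K).
Proof. by constructor. Qed.

Lemma inv_reach s : reachable threshold s -> Inv s.
Proof. elim=> [|s0 e s1 _ IH h]; [exact: inv_init|exact: inv_step IH h]. Qed.
End Proof.

Theorem mainTheorem9 (T : finType) (K threshold : nat) (s s' : state T K)
    (t : T) (n : node) :
  reachable threshold s -> step threshold s (EvAccess t n) s' -> freed s n = false.
Proof.
move=> R h; have I := inv_reach R.
inversion h; subst.
by case: (i_hold I H3) => _ [e [_ _ _ ->]].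
Qed.
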